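(* Let $\Phi:M_n(\mathbb{C})\to M_n(\mathbb{C})$ be a completely positive map with Kraus operators $K_1,\ldots,K_d\in M_n(\mathbb{C})$, i.e. $\Phi(X)=\sum_{j\in[d]}K_jXK_j^*$, and suppose $\Phi$ is Hermitian, i.e. $\Phi=\Phi^*$ where $\Phi^*$ is the adjoint with respect to the Hilbert–Schmidt inner product ($\operatorname{tr}(X\Phi^*(Y))=\operatorname{tr}(\Phi(X)Y)$ for all $X,Y$). For $K\in M_n(\mathbb{C})$ put $K_R=(K+K^* )/2$ and $K_I=-i(K-K^* )/2$. Then the $2d$ Hermitian matrices $K_{1,R},K_{1,I},\ldots,K_{d,R},K_{d,I}$ are Kraus operators for $\Phi$, i.e. $\Phi(X)=\sum_{j\in[d]}\big(K_{j,R}XK_{j,R}+K_{j,I}XK_{j,I}\big)$ for all $X\in M_n(\mathbb{C})$. In particular every Hermitian completely positive map on $M_n(\mathbb{C})$ admits a Kraus representation with at most twice its Kraus rank many Hermitian Kraus operators.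
   Context: The Kraus rank of a completely positive map is the smallest $d$ for which a representation $\Phi(X)=\sum_{j\in[d]}K_jXK_j^*$ exists. *)

(* Defs.v *)
From mathcomp Require Import all_boot all_order all_algebra.
Set Implicit Arguments. Unset Strict Implicit. Unset Printing Implicit Defensive.
Import Order.TTheory GRing.Theory Num.Theory.
Local Open Scope ring_scope.

Definition ctrmx (C : numClosedFieldType) (n : nat) (A : 'M[C]_n) : 'M[C]_n :=
  (map_mx Num.conj A)^T.

Definition kraus_map (C : numClosedFieldType) (n d : nat)
  (K : 'I_d -> 'M[C]_n) (X : 'M[C]_n) : 'M[C]_n :=
  \sum_(j < d) (K j *m X *m ctrmx (K j)).

Definition hermitian_map (C : numClosedFieldType) (n : nat)
  (Phi : 'M[C]_n -> 'M[C]_n) : Prop :=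
  forall X Y : 'M[C]_n, \tr (X *m Phi Y) = \tr (Phi X *m Y).

Definition hermitian_mx (C : numClosedFieldType) (n : nat) (A : 'M[C]_n) : Prop :=
  ctrmx A = A.

Definition re_mx (C : numClosedFieldType) (n : nat) (K : 'M[C]_n) : 'M[C]_n :=
  (2%:R)^-1 *: (K + ctrmx K).
Definition im_mx (C : numClosedFieldType) (n : nat) (K : 'M[C]_n) : 'M[C]_n :=
  (- Num.imaginary / 2%:R) *: (K - ctrmx K).

Definition kraus_representable (C : numClosedFieldType) (n : nat)
  (Phi : 'M[C]_n -> 'M[C]_n) (r : nat) : Prop :=
  exists L : 'I_r -> 'M[C]_n, forall X, Phi X = kraus_map L X.

Definition is_kraus_rank (C : numClosedFieldType) (n : nat)
  (Phi : 'M[C]_n -> 'M[C]_n) (r : nat) : Prop :=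
  kraus_representable Phi r /\
  forall r', kraus_representable Phi r' -> (r <= r')%N.

(* Main.v *)
Require Import Defs.
From mathcomp Require Import all_boot all_order all_algebra.
Import Order.TTheory GRing.Theory Num.Theory.
Local Open Scope ring_scope.

Section S.
Variable C : numClosedFieldType.
Variable n : nat.
Local Open Scope ring_scope.
Implicit Types A B X : 'M[C]_n.

Lemma tr_delta A (i j : 'I_n) : \tr (delta_mx j i *m A) = A i j.
Proof.
rewrite /mxtrace (bigD1 j) //= big1 ?addr0.
  rewrite mxE (bigD1 i) //= big1 ?addr0 ?mxE ?eqxx ?mul1r //.
  by move=> k /negbTE nk; rewrite mxE nk andbF mul0r.
by move=> k /negbTE nk; rewrite mxE big1 // => l _; rewrite mxE nk /= mul0r.
Qed.

Lemma tr_ext A B : (forall X, \tr (X *m A) = \tr (X *m B)) -> A = B.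
Proof. by move=> H; apply/matrixP => i j; rewrite -!tr_delta H. Qed.

Lemma ctrmxK A : ctrmx (ctrmx A) = A.
Proof. by apply/matrixP => i j; rewrite !mxE conjCK. Qed.

Lemma ctrmxM A B : ctrmx (A *m B) = ctrmx B *m ctrmx A.
Proof. by rewrite /ctrmx map_mxM trmx_mul. Qed.

Lemma ctrmxD A B : ctrmx (A + B) = ctrmx A + ctrmx B.
Proof. by apply/matrixP => i j; rewrite !mxE rmorphD. Qed.

Lemma ctrmxN A : ctrmx (- A) = - ctrmx A.
Proof. by apply/matrixP => i j; rewrite !mxE rmorphN. Qed.

Lemma ctrmxZ a A : ctrmx (a *: A) = a^* *: ctrmx A.
Proof. by apply/matrixP => i j; rewrite !mxE rmorphM. Qed.

Lemma conj_half : (2%:R^-1 : C)^* = 2%:R^-1.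
Proof. by rewrite fmorphV rmorph_nat. Qed.

Lemma re_herm A : hermitian_mx (re_mx A).
Proof. by rewrite /hermitian_mx /re_mx ctrmxZ ctrmxD ctrmxK conj_half addrC. Qed.

Lemma conj_mi : ((- 'i / 2%:R) : C)^* = 'i / 2%:R.
Proof. by rewrite rmorphM rmorphN /= conjCi fmorphV rmorph_nat opprK. Qed.

Lemma im_herm A : hermitian_mx (im_mx A).
Proof.
rewrite /hermitian_mx /im_mx ctrmxZ ctrmxD ctrmxN ctrmxK conj_mi.
by rewrite -[A - _]opprB scalerN -scaleNr mulNr opprK.
Qed.

Lemma re_im_id K X :
  re_mx K *m X *m re_mx K + im_mx K *m X *m im_mx K =
  2%:R^-1 *: (K *m X *m ctrmx K + ctrmx K *m X *m K).
Proof.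
rewrite /re_mx /im_mx -!scalemxAl -!scalemxAr !scalerA.
set H := ctrmx K.
rewrite !mulmxDl !mulmxDr !mulmxN !mulNmx opprK.
have ii : (- 'i / 2%:R * (- 'i / 2%:R) : C) = - (2%:R^-1 / 2%:R).
  by rewrite mulrACA mulrNN -expr2 sqrCi mulN1r.
rewrite ii scaleNr -scalerBr.
set a := K *m X *m K; set b := K *m X *m H; set c := H *m X *m K; set e := H *m X *m H.
have -> : a + b + (c + e) - (a - b + (- c + e)) = 2%:R *: (b + c).
  rewrite scaler_nat mulr2n [RHS]addrACA opprD opprB opprD opprK.
  rewrite [b - a]addrC [LHS]addrACA [X in X + _ = _]addrACA subrr add0r [X in _ + X = _]addrACA subrr addr0.
  by [].
rewrite scalerA -mulrA mulVf ?mulr1 // pnatr_eq0 //.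
Qed.
Lemma herm_dual d (K : 'I_d -> 'M[C]_n) :
  hermitian_map (kraus_map K) ->
  forall X, kraus_map K X = \sum_(j < d) (ctrmx (K j) *m X *m K j).
Proof.
move=> H X; apply: tr_ext => Y; rewrite H /kraus_map mulmx_suml mulmx_sumr !linear_sum.
apply: eq_bigr => j _.
rewrite /= -!mulmxA mxtrace_mulC -!mulmxA. by [].
Qed.

Lemma kraus_split d (K : 'I_d -> 'M[C]_n) :
  hermitian_map (kraus_map K) ->
  forall X, kraus_map K X =
      \sum_(j < d) (re_mx (K j) *m X *m re_mx (K j) + im_mx (K j) *m X *m im_mx (K j)).
Proof.
move=> H X.
under eq_bigr => j _ do rewrite re_im_id.
rewrite -scaler_sumr big_split /= -herm_dual //.
by rewrite -mulr2n -scaler_nat scalerA mulVf ?scale1r // pnatr_eq0.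
Qed.
End S.

Theorem mainTheorem6 (C : numClosedFieldType) (n d : nat) (K : 'I_d -> 'M[C]_n) :
  hermitian_map (kraus_map K) ->
  (forall j, hermitian_mx (re_mx (K j)) /\ hermitian_mx (im_mx (K j))) /\
  (forall X : 'M[C]_n,
      kraus_map K X =
      \sum_(j < d) (re_mx (K j) *m X *m re_mx (K j) + im_mx (K j) *m X *m im_mx (K j))) /\
  (forall r : nat, is_kraus_rank (kraus_map K) r ->
      exists L : 'I_(2 * r) -> 'M[C]_n,
        (forall i, hermitian_mx (L i)) /\
        forall X : 'M[C]_n, kraus_map K X = kraus_map L X).
Proof.
move=> H; split; first by move=> j; split; [apply: re_herm | apply: im_herm].
split; first exact: kraus_split.
move=> r [[L' HL'] _].
have HH : hermitian_map (kraus_map L').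
  by move=> X Y; rewrite -!HL'.
pose G (k : nat) : 'M[C]_n := if @insub nat (fun k => (k < r)%N) 'I_r k is Some i then L' i else 0.
pose L (i : 'I_(2 * r)) : 'M[C]_n :=
  if (i < r)%N then re_mx (G i) else im_mx (G (i - r)%N).
have hL : forall i, hermitian_mx (L i).
  by move=> i; rewrite /L; case: ifP => _; [apply: re_herm | apply: im_herm].
exists L; split => // X.
rewrite HL' (@kraus_split _ _ _ _ HH) /kraus_map.
under [RHS]eq_bigr => i _ do rewrite (hL i).
pose f (k : nat) : 'M[C]_n := if (k < r)%N then re_mx (G k) *m X *m re_mx (G k)
   else im_mx (G (k - r)%N) *m X *m im_mx (G (k - r)%N).
rewrite (eq_bigr (fun i : 'I_(2 * r) => f i)); last first.
  by move=> i _; rewrite /f /L; case: ifP.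
rewrite -(big_mkord xpredT f) (@big_cat_nat _ _ _ r 0 (2 * r) _ _ (leq0n r) (_ : r <= 2 * r)%N); last first.
  by rewrite mul2n -addnn leq_addr.
have -> : \sum_(r <= i < 2 * r) f i = \sum_(0 <= i < r) f (i + r)%N.
  rewrite -{1}[r]add0n big_addn.
  by have -> : (2 * r - r = r)%N by rewrite mul2n -addnn addnK.
rewrite !big_mkord /=. rewrite -big_split /=.
apply: eq_bigr => i _.
rewrite /f ltn_ord ltnNge leq_addl /= addnK /G valK //.
Qed.
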